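(* Let $X$ be a space with $\chi(X)\le\aleph_0$. There is no continuous, effective and transitive action on $X$ of an $\omega$-balanced group $G$ with $\psi(G)>\aleph_0$.
   Context: All spaces are Tychonoff. An action is effective if only the unit fixes every point, transitive if $Gx=X$. $\psi(G)$ is the pseudocharacter. $G$ is $\omega$-balanced if for each neighborhood $U$ of the unit there is a countable family $\gamma$ of neighborhoods of the unit such that each $x\in G$ has some $V\in\gamma$ with $xVx^{-1}\subset U$. *)

(* Defs.v *)
From HB Require Import structures.
From mathcomp Require Import all_boot all_order all_algebra.
From mathcomp Require Import all_classical all_reals all_analysis.
From mathcomp Require Import Rstruct Rstruct_topology.
Set Implicit Arguments. Unset Strict Implicit. Unset Printing Implicit Defensive.
Local Open Scope classical_set_scope.

Definition tychonoff_space (T : topologicalType) : Prop :=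
  hausdorff_space T /\ completely_regular_space T.

Definition countable_character (X : topologicalType) : Prop :=
  forall x : X, exists B : set (set X),
    countable B /\ (forall U, B U -> open_nbhs x U) /\
    (forall V, nbhs x V -> exists2 U, B U & U `<=` V).

Definition countable_pseudocharacter (T : topologicalType) : Prop :=
  forall x : T, exists F : set (set T),
    countable F /\ (forall U, F U -> open U) /\ \bigcap_(U in F) U = [set x].

Definition topological_group (G : topologicalType)
    (mul : G -> G -> G) (inv : G -> G) (e : G) : Prop :=
  [/\ (forall x y z, mul x (mul y z) = mul (mul x y) z),
      (forall x, mul e x = x /\ mul x e = x),
      (forall x, mul (inv x) x = e /\ mul x (inv x) = e),
      continuous (fun p : G * G => mul p.1 p.2) &
      continuous inv].

Definition omega_balanced (G : topologicalType)
    (mul : G -> G -> G) (inv : G -> G) (e : G) : Prop :=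
  forall U : set G, nbhs e U ->
    exists gamma : set (set G),
      countable gamma /\ (forall V, gamma V -> nbhs e V) /\
      (forall x : G, exists2 V, gamma V &
         (forall v, V v -> U (mul (mul x v) (inv x)))).

Definition group_action (G X : Type) (mul : G -> G -> G) (e : G)
    (act : G -> X -> X) : Prop :=
  (forall x, act e x = x) /\ (forall g h x, act (mul g h) x = act g (act h x)).

Definition effective_action (G X : Type) (e : G) (act : G -> X -> X) : Prop :=
  forall g, (forall x, act g x = x) -> g = e.

Definition transitive_action (G X : Type) (act : G -> X -> X) : Prop :=
  forall x y : X, exists g, act g x = y.

(* Main.v *)
Require Import Defs.
From mathcomp Require Import all_boot all_order all_algebra.
From mathcomp Require Import all_classical all_reals all_analysis.
Local Open Scope classical_set_scope.

Lemma cont_l {A B C : topologicalType} {f : A * B -> C} (b : B) :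
  continuous f -> continuous (fun a => f (a, b)).
Proof.
move=> fc a.
have h : {for a, continuous (fun a0 : A => (a0, b))}.
  by apply: cvg_pair; [exact: cvg_id | exact: cvg_cst].
exact: (continuous_comp h (fc _)).
Qed.

Lemma cont_r {A B C : topologicalType} {f : A * B -> C} (a : A) :
  continuous f -> continuous (fun b => f (a, b)).
Proof.
move=> fc b.
have h : {for b, continuous (fun b0 : B => (a, b0))}.
  by apply: cvg_pair; [exact: cvg_cst | exact: cvg_id].
exact: (continuous_comp h (fc _)).
Qed.

Lemma psi_at_e {G : topologicalType} {mul : G -> G -> G} {inv : G -> G} {e : G} :
  topological_group mul inv e ->
  (exists F : set (set G),
    countable F /\ (forall U, F U -> open U) /\ \bigcap_(U in F) U = [set e]) ->
  countable_pseudocharacter G.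
Proof.
move=> [As Id Iv Cm Ci] [F [cF [oF eF]]] a.
exists ((fun W => [set y | W (mul (inv a) y)]) @` F); split.
  exact: (sub_countable (card_image_le _ _) cF).
split.
  move=> U [W FW <-].
  have := (cont_r (inv a) Cm); rewrite continuousP => /(_ W (oF W FW)).
  done.
apply/seteqP; split.
  move=> y Hy.
  have : (\bigcap_(U in F) U) (mul (inv a) y).
    by move=> W FW; exact: (Hy _ (ex_intro2 _ _ W FW erefl)).
  rewrite eF => E.
  by rewrite -[y](Id y).1 -(Iv a).2 -As E (Id a).2.
move=> y -> U [W FW <-] /=.
have : [set e] (mul (inv a) a) by rewrite (Iv a).1.
by rewrite -eF => /(_ W FW).
Qed.

Theorem corollary4p11 (X G : topologicalType)
    (mul : G -> G -> G) (inv : G -> G) (e : G) (act : G -> X -> X) :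
  tychonoff_space X -> tychonoff_space G ->
  countable_character X ->
  topological_group mul inv e ->
  omega_balanced mul inv e ->
  ~ countable_pseudocharacter G ->
  group_action mul e act ->
  continuous (fun p : G * X => act p.1 p.2) ->
  effective_action e act ->
  transitive_action act ->
  False.
Proof.
move=> [hX _] _ cc TG ob npsi [ae am] ca eff tr.
have TG' := TG; move: TG' => [As Id Iv Cm Ci].
apply: npsi; apply: (psi_at_e TG).
case: (pselect (exists x0 : X, True)) => [[x0 _]|nX]; last first.
  exists [set setT]; split; first exact: countable1.
  split; first by move=> U ->; exact: openT.
  apply/seteqP; split.
    move=> g _ /=; apply: eff => x; exfalso; apply: nX; by exists x.
  by move=> g _ U ->.
have [B [cB [oB bB]]] := cc x0.
pose Ub (b : set X) := [set k : G | b (act k x0)].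
have nUb : forall b, B b -> nbhs e (Ub b).
  move=> b Bb; apply: open_nbhs_nbhs; split.
    have := cont_l x0 ca; rewrite continuousP => /(_ b (oB b Bb).1).
    done.
  by rewrite /Ub /= ae; exact: (oB b Bb).2.
have [gam Hgam] : exists gam : set X -> set (set G), forall b, B b ->
   countable (gam b) /\ (forall V, gam b V -> nbhs e V) /\
   (forall x, exists2 V, gam b V & forall v, V v -> Ub b (mul (mul x v) (inv x))).
  suff HH : forall b, exists gamma : set (set G), B b ->
   countable gamma /\ (forall V, gamma V -> nbhs e V) /\
   (forall x, exists2 V, gamma V & forall v, V v -> Ub b (mul (mul x v) (inv x))).
    by have [f hf] := boolp.choice HH; exists f.
  move=> b; case: (pselect (B b)) => Bb.
    by have [g hg] := ob _ (nUb b Bb); exists g.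
  by exists set0.
have invinv : forall h, inv (inv h) = h.
  move=> h; rewrite -[LHS](Id _).1 -(Iv h).2 -As (Iv (inv h)).2.
  by rewrite (Id h).2.
exists (\bigcup_(b in B) (interior @` gam b)); split.
  apply: bigcup_countable => // b Bb.
  exact: (sub_countable (card_image_le _ _) (Hgam b Bb).1).
split.
  by move=> U [b Bb [V gV <-]]; exact: open_interior.
apply/seteqP; split; last first.
  move=> g -> U [b Bb [V gV <-]].
  exact: ((Hgam b Bb).2.1 V gV).
move=> g Hg /=.
case: (pselect (g = e)) => // gne; exfalso.
have [y hy] : exists y, act g y <> y.
  apply: contrapT => H; apply: gne; apply: eff => x.
  by apply: contrapT => hx; apply: H; exists x.
have [h hh] := tr x0 y.
pose k := mul (inv h) (mul g h).
have Hk : act k x0 <> x0.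
  move=> E; apply: hy; rewrite -hh.
  have : act h (act k x0) = act h x0 by rewrite E.
  by rewrite -!am /k As (Iv h).2 (Id _).1 am.
have [A [oA x0A kA]] := hausdorff_accessible hX (x := x0) (y := act k x0)
  (introN eqP (fun E => Hk (esym E))).
have [b Bb bA] := bB A (open_nbhs_nbhs (conj oA (set_mem x0A))).
have [_ [_ bal]] := Hgam b Bb.
have [V gV HV] := bal (inv h).
have Vg : V g.
  apply: interior_subset; apply: Hg; exists b => //; by exists V.
have := HV g Vg; rewrite /Ub /= invinv -As => /bA.
by move: kA; rewrite inE /= => kA /kA.
Qed.
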